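(* A functor $f\colon A\to B$ between small categories is injective on objects if and only if it is isomorphic, in the arrow category $\mathbf{Cat}^{\mathbf{2}}$, to $\Pi(g)$ for some monomorphism $g$ of simplicial sets.
   Context: $\Pi\colon\mathbf{SSet}\to\mathbf{Cat}$ denotes the left adjoint of the nerve functor $N\colon\mathbf{Cat}\to\mathbf{SSet}$ (sending a simplicial set to its fundamental/classifying category). $\mathbf{Cat}^{\mathbf{2}}$ is the category whose objects are functors and whose morphisms are commutative squares. *)

(* Defs.v *)
From mathcomp Require Import all_boot.
Set Implicit Arguments. Unset Strict Implicit. Unset Printing Implicit Defensive.

Record Cat := MkCat {
  ob : Type;
  hom : ob -> ob -> Type;
  idc : forall a, hom a a;
  cmp : forall a b c, hom b c -> hom a b -> hom a c;
  cmp1l : forall a b (f : hom a b), cmp (idc b) f = f;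
  cmp1r : forall a b (f : hom a b), cmp f (idc a) = f;
  cmpA : forall a b c d (f : hom a b) (g : hom b c) (h : hom c d),
      cmp h (cmp g f) = cmp (cmp h g) f }.
Arguments idc {c0} a : rename.
Arguments cmp {c0 a b c} _ _ : rename.

Record Functor (C D : Cat) := MkFunctor {
  fob : ob C -> ob D;
  fhom : forall a b, hom a b -> hom (fob a) (fob b);
  fhom_id : forall a, fhom (idc a) = idc (fob a);
  fhom_cmp : forall a b c (g : hom b c) (f : hom a b),
      fhom (cmp g f) = cmp (fhom g) (fhom f) }.
Arguments fob {C D} f a : rename.
Arguments fhom {C D} f {a b} _ : rename.

Definition Fid (C : Cat) : Functor C C :=
  @MkFunctor C C (fun a => a) (fun a b f => f) (fun a => erefl) (fun _ _ _ _ _ => erefl).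

Lemma Fcomp_id (C D E : Cat) (G : Functor D E) (F : Functor C D) (a : ob C) :
  fhom G (fhom F (idc a)) = idc (fob G (fob F a)).
Proof. by rewrite !fhom_id. Qed.

Lemma Fcomp_cmp (C D E : Cat) (G : Functor D E) (F : Functor C D)
  (a b c : ob C) (g : hom b c) (f : hom a b) :
  fhom G (fhom F (cmp g f)) = cmp (fhom G (fhom F g)) (fhom G (fhom F f)).
Proof. by rewrite !fhom_cmp. Qed.

Definition Fcomp (C D E : Cat) (G : Functor D E) (F : Functor C D) : Functor C E :=
  @MkFunctor C E (fun a => fob G (fob F a)) (fun a b f => fhom G (fhom F f))
    (Fcomp_id G F) (Fcomp_cmp G F).

(** The ordinal [n] = {0 < 1 < ... < n} as a (poset) category. *)
Definition ordcat (n : nat) : Cat.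
Proof.
refine (@MkCat 'I_n.+1 (fun i j => (i <= j)%N) (fun i => leqnn i)
          (fun a b c g f => leq_trans f g) _ _ _);
  by move=> *; apply: eq_irrelevance.
Defined.

Definition Dhom (m n : nat) :=
  {f : 'I_m.+1 -> 'I_n.+1 | forall i j : 'I_m.+1, (i <= j)%N -> (f i <= f j)%N}.

Definition did (n : nat) : Dhom n n := @exist _ (fun f : 'I_n.+1 -> 'I_n.+1 => forall i j : 'I_n.+1, (i <= j)%N -> (f i <= f j)%N)
    (fun i => i) (fun i j h => h).

Definition dcomp (m n p : nat) (g : Dhom n p) (f : Dhom m n) : Dhom m p :=
  @exist _ (fun h : 'I_m.+1 -> 'I_p.+1 => forall i j : 'I_m.+1, (i <= j)%N -> (h i <= h j)%N)
    (fun i => sval g (sval f i))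
    (fun i j h => proj2_sig g _ _ (proj2_sig f i j h)).

Definition ordfun (m n : nat) (d : Dhom m n) : Functor (ordcat m) (ordcat n).
Proof.
refine (@MkFunctor (ordcat m) (ordcat n) (sval d)
          (fun a b h => proj2_sig d a b h) _ _);
  by move=> *; apply: eq_irrelevance.
Defined.

Record SSet := MkSSet {
  sx : nat -> Type;
  sact : forall m n, Dhom m n -> sx n -> sx m;
  sact_id : forall n (x : sx n), sact (did n) x = x;
  sact_comp : forall m n p (f : Dhom m n) (g : Dhom n p) (x : sx p),
      sact (dcomp g f) x = sact f (sact g x) }.
Arguments sact {s m n} d x : rename.

Record SSetMor (X Y : SSet) := MkSSetMor {
  smap : forall n, sx X n -> sx Y n;
  snat : forall m n (d : Dhom m n) (x : sx X n),
      smap (sact d x) = sact d (smap x) }.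
Arguments smap {X Y} s {n} x : rename.

Lemma Scomp_nat (X Y Z : SSet) (g : SSetMor Y Z) (h : SSetMor X Y)
  m n (d : Dhom m n) (x : sx X n) :
  smap g (smap h (sact d x)) = sact d (smap g (smap h x)).
Proof. by rewrite !snat. Qed.

Definition Scomp (X Y Z : SSet) (g : SSetMor Y Z) (h : SSetMor X Y) : SSetMor X Z :=
  @MkSSetMor X Z (fun n x => smap g (smap h x)) (Scomp_nat g h).

Definition mono (X Y : SSet) (g : SSetMor X Y) : Prop :=
  forall (Z : SSet) (h k : SSetMor Z X), Scomp g h = Scomp g k -> h = k.

(** A map of simplicial sets X -> N(C), where N(C)_n = functors [n] -> C and
    Delta acts on N(C) by precomposition. *)
Record ToNerve (X : SSet) (C : Cat) := MkToNerve {
  tn : forall n, sx X n -> Functor (ordcat n) C;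
  tn_nat : forall m n (d : Dhom m n) (x : sx X n),
      tn (sact d x) = Fcomp (tn x) (ordfun d) }.
Arguments tn {X C} t {n} x : rename.

(** [eta : X -> N(C)] is a universal arrow from X to the nerve functor, i.e.
    (C, eta) is Pi(X) with its unit (Pi = left adjoint of N). *)
Definition fundamental (X : SSet) (C : Cat) (eta : ToNerve X C) : Prop :=
  forall (D : Cat) (phi : ToNerve X D),
    exists! F : Functor C D, forall n (x : sx X n), tn phi x = Fcomp F (tn eta x).

Definition arrow_iso (A B C D : Cat) (f : Functor A B) (h : Functor C D) : Prop :=
  exists (u : Functor A C) (v : Functor B D) (u' : Functor C A) (v' : Functor D B),
    [/\ Fcomp v f = Fcomp h u, Fcomp v' h = Fcomp f u',
        Fcomp u' u = Fid A /\ Fcomp u u' = Fid C &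
        Fcomp v' v = Fid B /\ Fcomp v v' = Fid D].

(* Main.v *)
Require Import Defs.
From mathcomp Require Import all_boot.
From Stdlib Require Import FunctionalExtensionality ProofIrrelevance ClassicalEpsilon PropExtensionality.
Set Implicit Arguments. Unset Strict Implicit. Unset Printing Implicit Defensive.

Definition Mor (C : Cat) := {x : ob C & {y : ob C & hom x y}}.
Definition mk (C : Cat) (x y : ob C) (a : hom x y) : Mor C := existT _ x (existT _ y a).
Arguments mk {C x y} a.
Definition src C (m : Mor C) := projT1 m.
Definition tgt C (m : Mor C) := projT1 (projT2 m).
Definition idM C (c : ob C) : Mor C := mk (idc c).
Definition Comp C (m1 m2 m3 : Mor C) : Prop :=
  exists x y z (a : hom x y) (b : hom y z), [/\ m1 = mk a, m2 = mk b & m3 = mk (cmp b a)].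
Definition Fm C D (F : Functor C D) (m : Mor C) : Mor D := mk (fhom F (projT2 (projT2 m))).

Lemma mk_inj C (x y : ob C) (a b : hom x y) : mk a = mk b -> a = b.
Proof. move=> E. apply inj_pair2 in E. apply inj_pair2 in E. exact E. Qed.

Lemma mk_inv C (x y x' y' : ob C) (a : hom x y) (b : hom x' y') :
  mk a = mk b -> x = x' /\ y = y'.
Proof. move=> E; split; [exact: (f_equal (@src C) E) | exact: (f_equal (@tgt C) E)]. Qed.

Lemma mor_eta C (m : Mor C) : m = mk (projT2 (projT2 m)).
Proof. by case: m => x [y a]. Qed.

Lemma CompE C (x y z : ob C) (a : hom x y) (b : hom y z) (c : hom x z) :
  Comp (mk a) (mk b) (mk c) -> c = cmp b a.
Proof.
case=> x' [y' [z' [a' [b' [E1 E2 E3]]]]].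
case: (mk_inv E1) => ? ?; subst x' y'. have := mk_inj E1 => ?; subst a'.
case: (mk_inv E2) => _ ?; subst z'. have := mk_inj E2 => ?; subst b'.
exact: mk_inj E3.
Qed.

Lemma Comp_triv C (x y z : ob C) (a : hom x y) (b : hom y z) :
  Comp (mk a) (mk b) (mk (cmp b a)).
Proof. by exists x, y, z, a, b. Qed.

Lemma Comp_src C (m1 m2 m3 : Mor C) : Comp m1 m2 m3 ->
  [/\ src m3 = src m1, tgt m3 = tgt m2 & tgt m1 = src m2].
Proof. by case=> x [y [z [a [b [-> -> ->]]]]]. Qed.

Lemma Comp_idl C (x : ob C) m : src m = x -> Comp (idM x) m m.
Proof.
case: m => a [b f] /= <-. exists a, a, b, (idc a), f; split => //.
by rewrite cmp1r.
Qed.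

Lemma Comp_idr C (y : ob C) m : tgt m = y -> Comp m (idM y) m.
Proof.
case: m => a [b f] /= <-. exists a, b, b, f, (idc b); split => //.
by rewrite cmp1l.
Qed.

Lemma Comp_idr_inv C (z : ob C) m1 m3 : Comp m1 (idM z) m3 -> m3 = m1.
Proof.
case=> x [y [z' [a [b [E1 E2 E3]]]]].
case: (mk_inv E2) => ? ?; subst y z'. have := mk_inj E2 => ?; subst b.
by rewrite E3 E1 cmp1l.
Qed.

Lemma Fm_Comp C D (F : Functor C D) m1 m2 m3 :
  Comp m1 m2 m3 -> Comp (Fm F m1) (Fm F m2) (Fm F m3).
Proof.
case=> x [y [z [a [b [-> -> ->]]]]]. rewrite /Fm /= fhom_cmp. exact: Comp_triv.
Qed.

Lemma Fm_Fcomp C D E (G : Functor D E) (F : Functor C D) m :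
  Fm (Fcomp G F) m = Fm G (Fm F m).
Proof. by case: m => x [y a]. Qed.

Lemma FmK C D (F G : Functor C D) : (forall m, Fm F m = Fm G m) -> F = G.
Proof.
move=> H.
have Hob : forall x, fob F x = fob G x.
  by move=> x; exact: (f_equal (@src D) (H (idM x))).
case: F G H Hob => fo fh p1 p2 [go gh q1 q2] /= H Hob.
have eo : fo = go by apply: functional_extensionality.
subst go.
have eh : fh = gh.
  apply: functional_extensionality_dep => a.
  apply: functional_extensionality_dep => b.
  apply: functional_extensionality => f.
  exact: mk_inj (H (mk f)).
subst gh.
by rewrite (proof_irrelevance _ p1 q1) (proof_irrelevance _ p2 q2).
Qed.

Definition castH C (x x' y y' : ob C) (e1 : x = x') (e2 : y = y') (a : hom x y) : hom x' y' :=
  eq_rect y (hom x') (eq_rect x (fun z => hom z y) a x' e1) y' e2.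

Lemma castH_mk C (x x' y y' : ob C) (e1 : x = x') (e2 : y = y') (a : hom x y) :
  mk (castH e1 e2 a) = mk a.
Proof. by destruct e1, e2. Qed.

Section MkF.
Variables (C D : Cat) (fo : ob C -> ob D) (fm : Mor C -> Mor D).
Hypothesis Hs : forall m, src (fm m) = fo (src m).
Hypothesis Ht : forall m, tgt (fm m) = fo (tgt m).
Hypothesis Hid : forall c, fm (idM c) = idM (fo c).
Hypothesis Hc : forall m1 m2 m3, Comp m1 m2 m3 -> Comp (fm m1) (fm m2) (fm m3).

Definition mkF_hom a b (f : hom a b) : hom (fo a) (fo b) :=
  castH (Hs (mk f)) (Ht (mk f)) (projT2 (projT2 (fm (mk f)))).

Lemma mkF_mk a b (f : hom a b) : mk (mkF_hom f) = fm (mk f).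
Proof. by rewrite /mkF_hom castH_mk -mor_eta. Qed.

Lemma mkF_id a : mkF_hom (idc a) = idc (fo a).
Proof. apply: mk_inj. rewrite mkF_mk. exact: Hid. Qed.

Lemma mkF_cmp a b c (g : hom b c) (f : hom a b) :
  mkF_hom (cmp g f) = cmp (mkF_hom g) (mkF_hom f).
Proof.
have := Hc (Comp_triv f g). rewrite -!mkF_mk. exact: CompE.
Qed.

Definition mkF : Functor C D := MkFunctor mkF_id mkF_cmp.

Lemma Fm_mkF m : Fm mkF m = fm m.
Proof. case: m => a [b f]. exact: mkF_mk. Qed.
End MkF.

Section PN.
Variables (C : Cat) (E : Type) (pid : ob C -> E) (r : E -> Mor C).
Hypothesis Hr : forall c, r (pid c) = idM c.

Definition scond n (e : 'I_n.+1 -> 'I_n.+1 -> E) : Prop :=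
  [/\ forall i j : 'I_n.+1, (j < i)%N -> e i j = e j j,
      forall i, exists c, e i i = pid c &
      forall i j k : 'I_n.+1, (i <= j)%N -> (j <= k)%N ->
        Comp (r (e i j)) (r (e j k)) (r (e i k))].

Definition simp n := {e | @scond n e}.

Lemma psact_cond m n (d : Dhom m n) (s : simp n) :
  @scond m (fun i j => sval s (sval d i) (sval d j)).
Proof.
case: s => e [H1 H2 H3] /=; split.
- move=> i j ji. have := proj2_sig d j i (ltnW ji).
  rewrite leq_eqVlt => /orP [/eqP Eq | lt].
    by rewrite (val_inj Eq).
  exact: H1.
- move=> i; exact: H2.
- move=> i j k ij jk; apply: H3; exact: (proj2_sig d).
Qed.

Definition psact m n (d : Dhom m n) (s : simp n) : simp m :=
  exist _ _ (psact_cond d s).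

Lemma simp_eq n (s t : simp n) :
  (forall i j : 'I_n.+1, (i <= j)%N -> sval s i j = sval t i j) -> s = t.
Proof.
case: s t => e [H1 H2 H3] [e' [H1' H2' H3']] /= H.
have ee : e = e'.
  apply: functional_extensionality => i; apply: functional_extensionality => j.
  case: (leqP i j) => ij; first exact: H.
  by rewrite H1 // H1' // H.
subst e'.
by rewrite (proof_irrelevance _ (And3 H1 H2 H3) (And3 H1' H2' H3')).
Qed.

Lemma psact_id n (x : simp n) : psact (did n) x = x.
Proof. exact: simp_eq. Qed.

Lemma psact_comp m n p (f : Dhom m n) (g : Dhom n p) (x : simp p) :
  psact (dcomp g f) x = psact f (psact g x).
Proof. exact: simp_eq. Qed.

Definition PN : SSet := MkSSet psact_id psact_comp.

Section Eta.
Variables (n : nat) (s : simp n).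
Let e := sval s.
Definition eta_fo (i : 'I_n.+1) : ob C := src (r (e i i)).
Definition eta_fm (m : Mor (ordcat n)) : Mor C := r (e (src m) (tgt m)).

Lemma eta_Hs m : src (eta_fm m) = eta_fo (src m).
Proof.
case: m => i [j p]; rewrite /eta_fm /eta_fo /=.
case: (proj2_sig s) => _ _ H3.
by case: (Comp_src (H3 i i j (leqnn i) p)).
Qed.

Lemma eta_Ht m : tgt (eta_fm m) = eta_fo (tgt m).
Proof.
case: m => i [j p]; rewrite /eta_fm /eta_fo /=.
case: (proj2_sig s) => _ _ H3.
by case: (Comp_src (H3 i j j p (leqnn j))).
Qed.

Lemma eta_Hid c : eta_fm (idM c) = idM (eta_fo c).
Proof.
rewrite /eta_fm /eta_fo /=.
case: (proj2_sig s) => _ H2 _. case: (H2 c) => c' Ec.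
by rewrite /e Ec Hr.
Qed.

Lemma eta_Hc m1 m2 m3 : Comp m1 m2 m3 -> Comp (eta_fm m1) (eta_fm m2) (eta_fm m3).
Proof.
case=> x [y [z [a [b [-> -> ->]]]]]. rewrite /eta_fm /=.
case: (proj2_sig s) => _ _ H3. exact: H3.
Qed.

Definition eta_tn : Functor (ordcat n) C := mkF eta_Hs eta_Ht eta_Hid eta_Hc.
End Eta.

Lemma Fm_eta n (s : simp n) (i j : 'I_n.+1) (p : (i <= j)%N) :
  Fm (eta_tn s) (@mk (ordcat n) i j p) = r (sval s i j).
Proof. by rewrite Fm_mkF. Qed.

Lemma eta_nat m n (d : Dhom m n) (x : simp n) :
  eta_tn (psact d x) = Fcomp (eta_tn x) (ordfun d).
Proof.
apply: FmK => -[i [j p]].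
by rewrite Fm_Fcomp Fm_mkF /= Fm_mkF.
Qed.

Definition etaPN : ToNerve PN C := @MkToNerve PN C (fun n s => eta_tn s) eta_nat.

End PN.

Definition v_at n (i : 'I_n.+1) : Dhom 0 n :=
  exist (fun f : 'I_1 -> 'I_n.+1 => forall a b : 'I_1, (a <= b)%N -> (f a <= f b)%N)
    (fun _ => i) (fun _ _ _ => leqnn i).
Definition c0 n : Dhom n 0 :=
  exist (fun f : 'I_n.+1 -> 'I_1 => forall a b : 'I_n.+1, (a <= b)%N -> (f a <= f b)%N)
    (fun _ => ord0) (fun _ _ _ => leqnn 0).
Lemma dij_mono n (i j : 'I_n.+1) (p : (i <= j)%N) :
  forall a b : 'I_2, (a <= b)%N ->
    ((if (a == 0 :> nat) then i else j) <= (if (b == 0 :> nat) then i else j))%N.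
Proof. by case=> [[|[|?]] ?] [[|[|?]] ?] //= _; rewrite ?leqnn. Qed.
Definition dij n (i j : 'I_n.+1) (p : (i <= j)%N) : Dhom 1 n :=
  exist _ (fun a : 'I_2 => if (a == 0 :> nat) then i else j) (dij_mono p).

Definition e01 : Mor (ordcat 1) := @mk (ordcat 1) ord0 ord_max isT.

Section Fund.
Variables (C : Cat) (E : Type) (pid : ob C -> E) (r : E -> Mor C).
Hypothesis Hr : forall c, r (pid c) = idM c.
Variable s : Mor C -> E.
Hypothesis Hrs : forall m, r (s m) = m.
Hypothesis Hsid : forall c, s (idM c) = pid c.

Notation simp := (simp pid r).

Lemma vtx_cond c : @scond C E pid r 0 (fun _ _ => pid c).
Proof.
split => //; first by move=> i; exists c.
by move=> *; rewrite Hr; apply: Comp_idl.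
Qed.
Definition vtx c : simp 0 := exist _ _ (vtx_cond c).

Definition edge_f (u : E) (i j : 'I_2) : E :=
  if (i < j)%N then u else if (j == 0 :> nat) then pid (src (r u)) else pid (tgt (r u)).

Lemma edge_cond u : @scond C E pid r 1 (edge_f u).
Proof.
rewrite /edge_f; split.
- by case=> [[|[|?]] ?] [[|[|?]] ?].
- by case=> [[|[|?]] ?] //=; eexists.
- case=> [[|[|?]] ?] [[|[|?]] ?] [[|[|?]] ?] //= _ _; rewrite ?Hr;
  solve [apply: Comp_idl => // | apply: Comp_idr => //].
Qed.
Definition edge u : simp 1 := exist _ _ (edge_cond u).

Section Tri.
Variables (u w h : E).
Hypothesis H : Comp (r u) (r w) (r h).
Definition tri_f (i j : 'I_3) : E :=
  if (i < j)%N then (if (i == 0 :> nat) then (if (j == 1 :> nat) then u else h) else w)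
  else (if (j == 0 :> nat) then pid (src (r u))
        else if (j == 1 :> nat) then pid (tgt (r u)) else pid (tgt (r w))).
Lemma tri_cond : @scond C E pid r 2 tri_f.
Proof.
have [Hs3 Ht3 Hm] := Comp_src H.
rewrite /tri_f; split.
- by case=> [[|[|[|?]]] ?] [[|[|[|?]]] ?].
- by case=> [[|[|[|?]]] ?] //=; eexists.
- case=> [[|[|[|?]]] ?] [[|[|[|?]]] ?] [[|[|[|?]]] ?] //= _ _; rewrite ?Hr;
  solve [exact: H | apply: Comp_idl; by rewrite ?Hs3 ?Hm | apply: Comp_idr; by rewrite ?Ht3].
Qed.
Definition tri : simp 2 := exist _ _ tri_cond.
End Tri.

Lemma diag n (x : simp n) i : sval x i i = pid (src (r (sval x i i))).
Proof. case: (proj2_sig x) => _ H2 _. case: (H2 i) => c ->. by rewrite Hr. Qed.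

Lemma edge_face n (x : simp n) (i j : 'I_n.+1) (p : (i <= j)%N) :
  psact (dij p) x = edge (sval x i j).
Proof.
apply: simp_eq; case: (proj2_sig x) => _ _ H3.
case=> [[|[|?]] ?] [[|[|?]] ?] //= _; rewrite /edge_f /=.
- rewrite diag. by case: (Comp_src (H3 i i j (leqnn i) p)) => -> _ _.
- rewrite diag. by case: (Comp_src (H3 i j j p (leqnn j))) => _ _ ->.
Qed.

Lemma edge_v0 u : psact (v_at (ord0 : 'I_2)) (edge u) = vtx (src (r u)).
Proof. by apply: simp_eq => -[[|?] ?] [[|?] ?]. Qed.
Lemma edge_v1 u : psact (v_at (ord_max : 'I_2)) (edge u) = vtx (tgt (r u)).
Proof. by apply: simp_eq => -[[|?] ?] [[|?] ?]. Qed.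
Lemma edge_deg c : edge (pid c) = psact (c0 1) (vtx c).
Proof.
apply: simp_eq => -[[|[|?]] ?] [[|[|?]] ?] //= _; by rewrite /edge_f /= Hr.
Qed.

Section UP.
Variables (D : Cat) (phi : ToNerve (PN pid r) D).
Notation T := (@tn _ _ phi _).

Definition fo (c : ob C) : ob D := fob (T (vtx c)) ord0.
Definition fm (m : Mor C) : Mor D := Fm (T (edge (s m))) e01.

Lemma Tface n (x : simp n) (i j : 'I_n.+1) (p : (i <= j)%N) :
  Fm (T x) (@mk (ordcat n) i j p) = Fm (T (edge (sval x i j))) e01.
Proof.
rewrite -edge_face (tn_nat phi) Fm_Fcomp. congr (Fm _ (@mk (ordcat n) i j _)).
exact: eq_irrelevance.
Qed.

Lemma fm_src m : src (fm m) = fo (src m).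
Proof.
rewrite /fo; have := edge_v0 (s m); rewrite Hrs => <-. by rewrite (tn_nat phi).
Qed.
Lemma fm_tgt m : tgt (fm m) = fo (tgt m).
Proof.
rewrite /fo; have := edge_v1 (s m); rewrite Hrs => <-. by rewrite (tn_nat phi).
Qed.

Lemma Tdeg c : Fm (T (edge (pid c))) e01 = idM (fo c).
Proof.
rewrite edge_deg (tn_nat phi) Fm_Fcomp /Fm /= /idM /fo.
congr mk. rewrite -(fhom_id (T (vtx c))). congr fhom.
Qed.

Lemma fm_id c : fm (idM c) = idM (fo c).
Proof. by rewrite /fm Hsid Tdeg. Qed.

Lemma fm_comp m1 m2 m3 : Comp m1 m2 m3 -> Comp (fm m1) (fm m2) (fm m3).
Proof.
move=> H.
have H' : Comp (r (s m1)) (r (s m2)) (r (s m3)) by rewrite !Hrs.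
pose t := tri H'.
have p01 : ((ord0 : 'I_3) <= (inord 1 : 'I_3))%N by rewrite inordK.
have p12 : ((inord 1 : 'I_3) <= (ord_max : 'I_3))%N by rewrite inordK.
have p02 : ((ord0 : 'I_3) <= (ord_max : 'I_3))%N by [].
have E1 : fm m1 = Fm (T t) (@mk (ordcat 2) _ _ p01).
  by rewrite Tface /= /tri_f inordK.
have E2 : fm m2 = Fm (T t) (@mk (ordcat 2) _ _ p12).
  by rewrite Tface /= /tri_f inordK.
have E3 : fm m3 = Fm (T t) (@mk (ordcat 2) _ _ p02).
  by rewrite Tface /= /tri_f.
rewrite E1 E2 E3. apply: Fm_Comp.
have -> : p02 = (@cmp (ordcat 2) _ _ _ p12 p01) by exact: eq_irrelevance.
exact: Comp_triv.
Qed.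

Definition Fund : Functor C D := mkF fm_src fm_tgt fm_id fm_comp.

Lemma KL u : Fm (T (edge u)) e01 = fm (r u).
Proof.
have H' : Comp (r u) (r (pid (tgt (r u)))) (r (s (r u))) by rewrite Hr Hrs; apply: Comp_idr.
pose t := tri H'.
have p01 : ((ord0 : 'I_3) <= (inord 1 : 'I_3))%N by rewrite inordK.
have p12 : ((inord 1 : 'I_3) <= (ord_max : 'I_3))%N by rewrite inordK.
have p02 : ((ord0 : 'I_3) <= (ord_max : 'I_3))%N by [].
have := Fm_Comp (T t) (@Comp_triv (ordcat 2) _ _ _ p01 p12).
have -> : (@cmp (ordcat 2) _ _ _ p12 p01) = p02 by exact: eq_irrelevance.
rewrite (Tface t p01) (Tface t p12) (Tface t p02) /= /tri_f !inordK //= Tdeg.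
by move/Comp_idr_inv.
Qed.

End UP.

Lemma fundPN : fundamental (etaPN Hr).
Proof.
move=> D phi. exists (Fund phi); split.
- move=> n x /=. apply: FmK => -[i [j p]].
  rewrite Fm_Fcomp Fm_eta Fm_mkF Tface. exact: KL.
- move=> G HG. apply: FmK => m.
  rewrite Fm_mkF /fm HG Fm_Fcomp /=.
  by rewrite (Fm_eta Hr (edge (s m)) (isT : ((ord0 : 'I_2) <= (ord_max : 'I_2))%N)) /= Hrs.
Qed.

End Fund.

Lemma SSetMor_eq (X Y : SSet) (h k : SSetMor X Y) :
  (forall n (x : sx X n), smap h x = smap k x) -> h = k.
Proof.
case: h k => h1 h2 [k1 k2] /= H.
have e : h1 = k1.
  apply: functional_extensionality_dep => n; apply: functional_extensionality => x.
  exact: H.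
subst k1. by rewrite (proof_irrelevance _ h2 k2).
Qed.

Section Forward.
Variables (A B : Cat) (f : Functor A B).
Hypothesis finj : injective (fob f).

Definition rA : Mor A -> Mor A := id.
Lemma HrA c : rA (idM c) = idM c. Proof. by []. Qed.
Definition XA := PN (@idM A) rA.

Definition EY := (Mor B + Mor A)%type.
Definition pidY (c : ob B) : EY := inl (idM c).
Definition rY (e : EY) : Mor B := match e with inl m => m | inr m => Fm f m end.
Lemma HrY c : rY (pidY c) = idM c. Proof. by []. Qed.
Definition YB := PN pidY rY.

Definition isId (m : Mor A) : Prop := exists a, m = idM a.
Definition ghat (m : Mor A) : EY :=
  if excluded_middle_informative (isId m) then inl (Fm f m) else inr m.

Lemma rY_ghat m : rY (ghat m) = Fm f m.
Proof. by rewrite /ghat; case: excluded_middle_informative. Qed.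

Lemma ghat_id a : ghat (idM a) = pidY (fob f a).
Proof.
rewrite /ghat; case: (excluded_middle_informative (isId (idM a))) => [?|H]; last by case: H; exists a.
by rewrite /pidY /Fm /idM /= fhom_id.
Qed.

Lemma ghat_inj : injective ghat.
Proof.
move=> m m'; rewrite /ghat.
case: (excluded_middle_informative (isId m)) => [[a Ea]|n1];
case: (excluded_middle_informative (isId m')) => [[a' Ea']|n2] E; try by case: E.
case: E => E *. move: E; rewrite Ea Ea' /= => /finj ->. done.
Qed.

Lemma g_cond n (x : simp (@idM A) rA n) :
  @scond B EY pidY rY n (fun i j => ghat (sval x i j)).
Proof.
case: (proj2_sig x) => H1 H2 H3; split.
- by move=> i j ji; rewrite H1.
- by move=> i; case: (H2 i) => c ->; exists (fob f c); rewrite ghat_id.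
- move=> i j k ij jk; rewrite !rY_ghat; apply: Fm_Comp; exact: H3.
Qed.

Definition gmap n (x : simp (@idM A) rA n) : simp pidY rY n := exist _ _ (g_cond x).

Lemma gnat m n (d : Dhom m n) (x : sx XA n) :
  gmap (@sact XA m n d x) = @sact YB m n d (gmap x).
Proof. exact: simp_eq. Qed.

Definition gXY : SSetMor XA YB := @MkSSetMor XA YB gmap gnat.

Lemma g_mono : mono gXY.
Proof.
move=> Z h k E. apply: SSetMor_eq => n z.
have := f_equal (fun F : SSetMor Z YB => smap F z) E => /= E'.
apply: simp_eq => i j _.
apply: ghat_inj. exact: (f_equal (fun y : simp pidY rY n => sval y i j) E').
Qed.

Lemma compat n (x : sx XA n) :
  Fcomp f (tn (etaPN HrA) x) = tn (etaPN HrY) (smap gXY x).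
Proof.
apply: FmK => -[i [j p]].
by rewrite Fm_Fcomp /= !Fm_eta /= rY_ghat.
Qed.

Lemma arrow_self : arrow_iso f f.
Proof.
exists (Fid A), (Fid B), (Fid A), (Fid B).
split; try split; apply: FmK => -[x [y a]] //.
Qed.

End Forward.

Definition chaotic (T : Type) : Cat.
Proof.
refine (@MkCat T (fun _ _ => unit) (fun _ => tt) (fun _ _ _ _ _ => tt) _ _ _).
- by move=> a b [].
- by move=> a b [].
- by [].
Defined.

Definition chaoticF (C : Cat) (T : Type) (o : ob C -> T) : Functor C (chaotic T) :=
  @MkFunctor C (chaotic T) o (fun _ _ _ => tt) (fun _ => erefl) (fun _ _ _ _ _ => erefl).

Lemma chaotic_eq (C : Cat) (T : Type) (F G : Functor C (chaotic T)) :
  (forall x, fob F x = fob G x) -> F = G.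
Proof.
move=> H; apply: FmK => -[a [b f]]; rewrite /Fm /=.
move: (fhom F f) (fhom G f); rewrite !H. by case; case.
Qed.

Lemma Dhom_eq m n (d d' : Dhom m n) : (forall i, sval d i = sval d' i) -> d = d'.
Proof.
case: d d' => d p [d' p'] /= H.
have e : d = d' by apply: functional_extensionality.
subst d'. by rewrite (proof_irrelevance _ p p').
Qed.

Lemma v0_did : v_at (ord0 : 'I_1) = did 0.
Proof. apply: Dhom_eq => i /=. by rewrite (ord1 i). Qed.
Lemma c00_did : c0 0 = did 0.
Proof. apply: Dhom_eq => i /=. by rewrite (ord1 i). Qed.

Lemma eta_surj (X : SSet) (PX : Cat) (etaX : ToNerve X PX) :
  fundamental etaX -> forall p, exists x : sx X 0, fob (tn etaX x) ord0 = p.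
Proof.
move=> H.
pose P0 := fun p => exists x : sx X 0, fob (tn etaX x) ord0 = p.
pose F1 := chaoticF (fun _ : ob PX => True).
pose F2 := chaoticF P0.
have nat1 : forall m n (d : Dhom m n) (x : sx X n),
    Fcomp F1 (tn etaX (sact d x)) = Fcomp (Fcomp F1 (tn etaX x)) (ordfun d).
  by move=> m n d x; rewrite (tn_nat etaX); apply: chaotic_eq.
pose phi := @MkToNerve X (chaotic Prop) (fun n x => Fcomp F1 (tn etaX x)) nat1.
have [F [_ HU]] := H _ phi.
have e1 := HU F1 (fun n x => erefl).
have e2 : F = F2.
  apply: HU => n x /=; apply: chaotic_eq => i /=.
  apply: propositional_extensionality; split => // _.
  exists (sact (v_at i) x). by rewrite (tn_nat etaX).
move=> p. have := f_equal (fun G : Functor PX (chaotic Prop) => fob G p) (etrans (esym e1) e2).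
move=> /= E. have : P0 p by rewrite -E. done.
Qed.

Lemma eta_vinj (Y : SSet) (PY : Cat) (etaY : ToNerve Y PY) :
  fundamental etaY -> forall y y' : sx Y 0,
    fob (tn etaY y) ord0 = fob (tn etaY y') ord0 -> y = y'.
Proof.
move=> H.
have nat1 : forall m n (d : Dhom m n) (x : sx Y n),
    chaoticF (fun i : ob (ordcat m) => sact (v_at i) (sact d x)) =
    Fcomp (chaoticF (fun i : ob (ordcat n) => sact (v_at i) x)) (ordfun d).
  move=> m n d x; apply: chaotic_eq => i /=.
  rewrite -sact_comp. congr sact. exact: Dhom_eq.
pose phi := @MkToNerve Y (chaotic (sx Y 0))
  (fun n x => chaoticF (fun i : ob (ordcat n) => sact (v_at i) x)) nat1.
have [F [HF _]] := H _ phi.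
have key : forall y : sx Y 0, y = fob F (fob (tn etaY y) ord0).
  move=> y. have := f_equal (fun G : Functor (ordcat 0) (chaotic (sx Y 0)) => fob G ord0) (HF 0 y).
  by rewrite /= v0_did sact_id.
by move=> y y' E; rewrite (key y) (key y') E.
Qed.

Definition Zt : SSet.
Proof.
refine (@MkSSet (fun _ => unit) (fun _ _ _ _ => tt) _ _).
- by move=> n [].
- by [].
Defined.

Lemma mono_inj (X Y : SSet) (g : SSetMor X Y) :
  mono g -> forall x x' : sx X 0, smap g x = smap g x' -> x = x'.
Proof.
move=> Hm x x' E.
have hn : forall (x : sx X 0) m n (d : Dhom m n) (z : sx Zt n),
    sact (c0 m) x = sact d (sact (c0 n) x).
  move=> y m n d z. rewrite -sact_comp. by congr sact.
pose hx := @MkSSetMor Zt X (fun n _ => sact (c0 n) x) (hn x).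
pose hx' := @MkSSetMor Zt X (fun n _ => sact (c0 n) x') (hn x').
have : hx = hx'.
  apply: Hm. apply: SSetMor_eq => n z /=. by rewrite !snat E.
move=> /(f_equal (fun h : SSetMor Zt X => smap h (tt : sx Zt 0))) /=.
by rewrite c00_did !sact_id.
Qed.

Theorem lemma2p4 (A B : Cat) (f : Functor A B) :
  injective (fob f) <->
  exists (X Y : SSet) (g : SSetMor X Y),
    mono g /\
    exists (PX PY : Cat) (etaX : ToNerve X PX) (etaY : ToNerve Y PY)
           (h : Functor PX PY),
      [/\ fundamental etaX, fundamental etaY,
          (forall n (x : sx X n), Fcomp h (tn etaX x) = tn etaY (smap g x)) &
          arrow_iso f h].
Proof.
split.
- move=> finj.
  exists (XA A), (YB f), (gXY f); split; first exact: g_mono.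
  exists A, B, (etaPN (@HrA A)), (etaPN (HrY f)), f; split.
  + by apply: (@fundPN _ _ _ _ (@HrA A) id).
  + by apply: (@fundPN _ _ _ _ (HrY f) inl).
  + exact: (compat f).
  + exact: (arrow_self f).
- case=> X [Y [g [Hm [PX [PY [etaX [etaY [h [FX FY Hc Hiso]]]]]]]]].
  have hinj : injective (fob h).
    move=> p q E.
    have [x Ex] := eta_surj FX p. have [y Ey] := eta_surj FX q.
    have E' : fob (tn etaY (smap g x)) ord0 = fob (tn etaY (smap g y)) ord0.
      by rewrite -!Hc /= Ex Ey.
    have := mono_inj Hm (eta_vinj FY E'). by rewrite -Ex -Ey => ->.
  case: Hiso => u [v [u' [v' [Hvf _ [Hu'u _] _]]]].
  move=> a1 a2 E.
  have E1 : fob h (fob u a1) = fob h (fob u a2).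
    have := f_equal (fun F : Functor A PY => fob F a1) Hvf.
    have := f_equal (fun F : Functor A PY => fob F a2) Hvf.
    by rewrite /= E => <- <-.
  have := f_equal (fun F : Functor A A => fob F a1) Hu'u.
  have := f_equal (fun F : Functor A A => fob F a2) Hu'u.
  by rewrite /= (hinj _ _ E1) => -> ->.
Qed.
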